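(* Consider the single-element, single-slab periodic space-time SBP scheme: unknowns $\boldsymbol\rho,\boldsymbol g_1,\dots,\boldsymbol g_{n_v}\in\mathbb R^{(n_t+1)(n_x+1)}$ satisfying $$\mathsf D_t\boldsymbol\rho+\tilde{\mathsf D}_x\langle v\boldsymbol g\rangle=-\sigma_a\boldsymbol\rho-\mathsf H_t^{-1}\mathsf t_B\mathsf t_B^\top(\boldsymbol\rho-\boldsymbol\rho(0)),$$ $$\mathsf D_t\boldsymbol g_k+\tfrac{v_k}{\varepsilon}\tilde{\mathsf D}_x\boldsymbol g_k-\tfrac1\varepsilon\langle v\tilde{\mathsf D}_x\boldsymbol g\rangle+\tfrac{v_k}{\varepsilon^2}\tilde{\mathsf D}_x\boldsymbol\rho=-\Big(\tfrac{\sigma_s}{\varepsilon^2}+\sigma_a\Big)\boldsymbol g_k-\mathsf H_t^{-1}\mathsf t_B\mathsf t_B^\top(\boldsymbol g_k-\boldsymbol g_k(0)),\quad k=1,\dots,n_v,$$ with initial data satisfying $\langle\boldsymbol g(0)\rangle=0$. Then the scheme is stable: every solution satisfies $$\tfrac12\boldsymbol\rho^\top(\bar{\boldsymbol t}_T\bar{\boldsymbol t}_T^\top\otimes\bar{\mathsf H}_x)\boldsymbol\rho+\tfrac{\varepsilon^2}2\langle\boldsymbol g^\top(\bar{\boldsymbol t}_T\bar{\boldsymbol t}_T^\top\otimes\bar{\mathsf H}_x)\boldsymbol g\rangle\le\tfrac12\boldsymbol\rho(0)^\top(\bar{\boldsymbol t}_B\bar{\boldsymbol t}_B^\top\otimes\bar{\mathsf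 H}_x)\boldsymbol\rho(0)+\tfrac{\varepsilon^2}2\langle\boldsymbol g(0)^\top(\bar{\boldsymbol t}_B\bar{\boldsymbol t}_B^\top\otimes\bar{\mathsf H}_x)\boldsymbol g(0)\rangle,$$ i.e. the discrete energy at the final time is bounded by the discrete energy of the initial data.
   Context: SBP operators: on nodes $x_0<\dots<x_n$, a matrix $\bar{\mathsf D}$ is a degree-$p$ SBP approximation of $d/dx$ if $\bar{\mathsf D}\boldsymbol x^k=k\boldsymbol x^{k-1}$ for $0\le k\le p$, $\bar{\mathsf D}=\bar{\mathsf H}^{-1}\bar{\mathsf Q}$ with $\bar{\mathsf H}$ diagonal symmetric positive definite, and $\bar{\mathsf Q}+\bar{\mathsf Q}^\top=\bar{\boldsymbol t}_R\bar{\boldsymbol t}_R^\top-\bar{\boldsymbol t}_L\bar{\boldsymbol t}_L^\top=\mathrm{diag}(-1,0,\dots,0,1)$, $\bar{\boldsymbol t}_L=(1,0,\dots,0)^\top$, $\bar{\boldsymbol t}_R=(0,\dots,0,1)^\top$. Let $\bar{\mathsf D}_x=\bar{\mathsf H}_x^{-1}\bar{\mathsf Q}_x$ be such an operator on $n_x+1$ spatial nodes and $\bar{\mathsf D}_t=\bar{\mathsf H}_t^{-1}\bar{\mathsf Q}_t$ one on $n_t+1$ temporal nodes with $\bar{\boldsymbol t}_B=(1,0,\dots,0)^\top$, $\bar{\boldsymbol t}_T=(0,\dots,0,1)^\top$. With identities $\mathsf I_{n_x},\mathsf I_{n_t}$ of sizes $n_x+1,n_t+1$: $\mathsf D_t=\bar{\mathsf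 D}_t\otimes\mathsf I_{n_x}$, $\mathsf D_x=\mathsf I_{n_t}\otimes\bar{\mathsf D}_x$, $\mathsf H_t=\bar{\mathsf H}_t\otimes\mathsf I_{n_x}$, $\mathsf H_x=\mathsf I_{n_t}\otimes\bar{\mathsf H}_x$, $\mathsf t_R=\mathsf I_{n_t}\otimes\bar{\boldsymbol t}_R$, $\mathsf t_L=\mathsf I_{n_t}\otimes\bar{\boldsymbol t}_L$, $\mathsf t_B=\bar{\boldsymbol t}_B\otimes\mathsf I_{n_x}$. Periodic operator: $\tilde{\mathsf D}_x=\mathsf D_x-\frac12\mathsf H_x^{-1}\big(\mathsf t_R(\mathsf t_R^\top-\mathsf t_L^\top)-\mathsf t_L(\mathsf t_L^\top-\mathsf t_R^\top)\big)$. Velocity nodes $v_k$ and weights $\omega_k$, $k=1,\dots,n_v$, with $\sum_k\omega_k=1$, $\sum_k\omega_kv_k=0$; $\langle\boldsymbol a\rangle=\sum_k\omega_k\boldsymbol a_k$ for $k$-indexed vectors or scalars (e.g. $\langle\boldsymbol g^\top M\boldsymbol g\rangle=\sum_k\omega_k\boldsymbol g_k^\top M\boldsymbol g_k$). Parameters $\varepsilon>0$, $\sigma_s>0$, $\sigma_a\ge0$. $\boldsymbol\rho(0),\boldsymbol g_k(0)$ are given initial-data vectors. *)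

(* Defs.v *)
(* Kronecker product = tensmx (A *t B) from mathcomp real_closed/mxtens:
   (A *t B) (i1*p+i2) (j1*q+j2) = A i1 j1 * B i2 j2  (standard Kronecker ordering). *)
From HB Require Import structures.
From mathcomp Require Import all_boot all_order all_algebra.
From mathcomp Require Export mxtens.
Set Implicit Arguments. Unset Strict Implicit. Unset Printing Implicit Defensive.
Import Order.TTheory GRing.Theory Num.Theory.
Local Open Scope ring_scope.

Definition tfirst (R : pzRingType) (n : nat) : 'cV[R]_n.+1 :=
  \col_i (if i == ord0 then 1 else 0).
Definition tlast (R : pzRingType) (n : nat) : 'cV[R]_n.+1 :=
  \col_i (if i == ord_max then 1 else 0).

Definition nodepow (R : pzRingType) (n : nat) (x : 'cV[R]_n.+1) (k : nat) : 'cV[R]_n.+1 :=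
  \col_i (x i 0 ^+ k).

Definition is_SBP (R : realFieldType) (n p : nat) (x : 'cV[R]_n.+1)
  (D H Q : 'M[R]_n.+1) : Prop :=
  [/\ (forall i j : 'I_n.+1, (i < j)%N -> x i 0 < x j 0),
      (forall k, (k <= p)%N -> D *m nodepow x k = k%:R *: nodepow x k.-1),
      is_diag_mx H /\ (forall i, 0 < H i i),
      D = invmx H *m Q &
      Q + Q^T = tlast R n *m (tlast R n)^T - tfirst R n *m (tfirst R n)^T].

Definition vavg (R : pzRingType) (nv N : nat) (w : 'I_nv -> R) (a : 'I_nv -> 'cV[R]_N)
  : 'cV[R]_N := \sum_(k < nv) w k *: a k.

Definition qform (R : pzRingType) (N : nat) (M : 'M[R]_N) (u : 'cV[R]_N) : R :=
  ((u^T *m M *m u) 0 0).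

(* Main.v *)
Require Import Defs.
From HB Require Import structures.
From mathcomp Require Import all_boot all_order all_algebra.
From mathcomp Require Import mxtens.
From mathcomp Require Import ring lra.
Set Implicit Arguments. Unset Strict Implicit. Unset Printing Implicit Defensive.
Import Order.TTheory GRing.Theory Num.Theory.
Local Open Scope ring_scope.

Section Aux.
Variable R : realFieldType.

Definition bf N (A : 'M[R]_N) (u z : 'cV[R]_N) : R := (u^T *m A *m z) 0 0.

Lemma bfDr N (A : 'M[R]_N) u z1 z2 : bf A u (z1 + z2) = bf A u z1 + bf A u z2.
Proof. by rewrite /bf mulmxDr mxE. Qed.
Lemma bfNr N (A : 'M[R]_N) u z : bf A u (- z) = - bf A u z.
Proof. by rewrite /bf mulmxN mxE. Qed.
Lemma bfBr N (A : 'M[R]_N) u z1 z2 : bf A u (z1 - z2) = bf A u z1 - bf A u z2.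
Proof. by rewrite bfDr bfNr. Qed.
Lemma bfZr N (A : 'M[R]_N) u c z : bf A u (c *: z) = c * bf A u z.
Proof. by rewrite /bf -scalemxAr mxE. Qed.
Lemma bfMr N (A B : 'M[R]_N) u z : bf A u (B *m z) = bf (A *m B) u z.
Proof. by rewrite /bf !mulmxA. Qed.
Lemma bfDm N (A B : 'M[R]_N) u z : bf (A + B) u z = bf A u z + bf B u z.
Proof. by rewrite /bf mulmxDr mulmxDl mxE. Qed.
Lemma bfNm N (A : 'M[R]_N) u z : bf (- A) u z = - bf A u z.
Proof. by rewrite /bf mulmxN mulNmx mxE. Qed.
Lemma bfZm N (A : 'M[R]_N) c u z : bf (c *: A) u z = c * bf A u z.
Proof. by rewrite /bf -scalemxAr -scalemxAl mxE. Qed.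
Lemma bf_tr N (A : 'M[R]_N) u z : bf A u z = bf A^T z u.
Proof. rewrite /bf; have -> : (u^T *m A *m z) 0 0 = ((u^T *m A *m z)^T) 0 0 by rewrite [in RHS]mxE.
by rewrite !trmx_mul trmxK mulmxA. Qed.
Lemma bfZl N (A : 'M[R]_N) u c z : bf A (c *: u) z = c * bf A u z.
Proof. by rewrite bf_tr bfZr -bf_tr. Qed.
Lemma bf0l N (A : 'M[R]_N) z : bf A 0 z = 0.
Proof. by rewrite /bf trmx0 !mul0mx mxE. Qed.
Lemma bf0r N (A : 'M[R]_N) u : bf A u 0 = 0.
Proof. by rewrite /bf mulmx0 mxE. Qed.
Lemma bf_sumr N n (A : 'M[R]_N) u (F : 'I_n -> 'cV[R]_N) :
  bf A u (\sum_(k < n) F k) = \sum_(k < n) bf A u (F k).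
Proof. by rewrite /bf mulmx_sumr summxE. Qed.
Lemma bf_suml N n (A : 'M[R]_N) z (F : 'I_n -> 'cV[R]_N) :
  bf A (\sum_(k < n) F k) z = \sum_(k < n) bf A (F k) z.
Proof. rewrite bf_tr bf_sumr; apply: eq_bigr => k _; by rewrite -bf_tr. Qed.
Lemma bf_vavgr N n (A : 'M[R]_N) u w (F : 'I_n -> 'cV[R]_N) :
  bf A u (vavg w F) = \sum_(k < n) w k * bf A u (F k).
Proof. rewrite /vavg bf_sumr; apply: eq_bigr => k _; by rewrite bfZr. Qed.
Lemma bf_vavgl N n (A : 'M[R]_N) z w (F : 'I_n -> 'cV[R]_N) :
  bf A (vavg w F) z = \sum_(k < n) w k * bf A (F k) z.
Proof. rewrite /vavg bf_suml; apply: eq_bigr => k _; by rewrite bfZl. Qed.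

Definition isdiag N (A : 'M[R]_N) := forall i j, i != j -> A i j = 0.

Lemma bf_diag N (A : 'M[R]_N) u : isdiag A ->
  bf A u u = \sum_i A i i * u i 0 ^+ 2.
Proof.
move=> dA; rewrite /bf mxE; apply: eq_bigr => j _.
rewrite mxE (bigD1 j) //= big1 ?addr0; last first.
  by move=> i ij; rewrite dA ?mulr0.
by rewrite mxE; ring.
Qed.

Lemma bf_diag_ge0 N (A : 'M[R]_N) u : isdiag A -> (forall i, 0 <= A i i) -> 0 <= bf A u u.
Proof.
move=> dA pA; rewrite bf_diag //; apply: sumr_ge0 => i _.
by rewrite mulr_ge0 ?sqr_ge0.
Qed.

Lemma bf_diag_eq0 N (A : 'M[R]_N) u : isdiag A -> (forall i, 0 < A i i) -> bf A u u = 0 -> u = 0.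
Proof.
move=> dA pA; rewrite bf_diag // => /eqP; rewrite psumr_eq0; last first.
  by move=> i _; rewrite mulr_ge0 ?sqr_ge0 ?ltW.
move/allP=> H; apply/matrixP => i j; rewrite [j]ord1 mxE.
have /H := mem_index_enum i; rewrite /= mulf_eq0 (gt_eqF (pA i)) /= sqrf_eq0.
by move/eqP.
Qed.

Lemma isdiag_tens m n (A : 'M[R]_m) (B : 'M[R]_n) : isdiag A -> isdiag B -> isdiag (A *t B).
Proof.
move=> dA dB i j; case: (mxtens_indexP i) => i0 i1; case: (mxtens_indexP j) => j0 j1.
rewrite tensmxE; case: (eqVneq i0 j0) => [<-|ne]; last by rewrite dA ?mul0r.
case: (eqVneq i1 j1) => [<-|ne]; last by rewrite dB ?mulr0.
by rewrite eqxx.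
Qed.

Lemma tens_diag_entry m n (A : 'M[R]_m) (B : 'M[R]_n) (P : R -> Prop) :
  (forall x y, P x -> P y -> P (x * y)) ->
  (forall i, P (A i i)) -> (forall i, P (B i i)) -> forall i, P ((A *t B) i i).
Proof.
move=> HP hA hB i; case: (mxtens_indexP i) => i0 i1; rewrite tensmxE; exact: HP.
Qed.

Lemma isdiag_tr N (A : 'M[R]_N) : isdiag A -> A^T = A.
Proof.
move=> dA; apply/matrixP => i j; rewrite mxE; case: (eqVneq i j) => [->//|ne].
by rewrite !dA // eq_sym.
Qed.

Lemma isdiag_of m (A : 'M[R]_m.+1) : is_diag_mx A -> isdiag A.
Proof. by move/is_diag_mxP => H i j ne; apply: H. Qed.

Lemma diag_unit m (A : 'M[R]_m) : isdiag A -> (forall i, 0 < A i i) -> A \in unitmx.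
Proof.
move=> dA pA; rewrite unitmxE det_trig; last first.
  by apply: is_diag_mx_is_trig; apply/is_diag_mxP => i j ne; apply: dA.
rewrite unitfE; apply/prodf_neq0 => i _; exact: lt0r_neq0.
Qed.

Lemma tensmxDr m n p q (A : 'M[R]_(m,n)) (B C : 'M[R]_(p,q)) : A *t (B + C) = A *t B + A *t C.
Proof. by apply/matrixP => i j; rewrite !mxE mulrDr. Qed.
Lemma tensmxNr m n p q (A : 'M[R]_(m,n)) (B : 'M[R]_(p,q)) : A *t (- B) = - (A *t B).
Proof. by apply/matrixP => i j; rewrite !mxE mulrN. Qed.
Lemma tensmxBr m n p q (A : 'M[R]_(m,n)) (B C : 'M[R]_(p,q)) : A *t (B - C) = A *t B - A *t C.
Proof. by rewrite tensmxDr tensmxNr. Qed.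
Lemma tensmxDl m n p q (A B : 'M[R]_(m,n)) (C : 'M[R]_(p,q)) : (A + B) *t C = A *t C + B *t C.
Proof. by apply/matrixP => i j; rewrite !mxE mulrDl. Qed.
Lemma tensmxNl m n p q (A : 'M[R]_(m,n)) (C : 'M[R]_(p,q)) : (- A) *t C = - (A *t C).
Proof. by apply/matrixP => i j; rewrite !mxE mulNr. Qed.
Lemma tensmxBl m n p q (A B : 'M[R]_(m,n)) (C : 'M[R]_(p,q)) : (A - B) *t C = A *t C - B *t C.
Proof. by rewrite tensmxDl tensmxNl. Qed.

Lemma skew_aux N (Q a b c d : 'M[R]_N) : Q + Q^T = a - c -> a^T = a -> c^T = c -> b^T = d ->
  (Q - (1/2) *: (a - b - (c - d)))^T = - (Q - (1/2) *: (a - b - (c - d))).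
Proof.
move=> H Ha Hc Hb; apply/matrixP => i j.
have F (X Y : 'M[R]_N) k l : X = Y -> X k l = Y k l by move=> ->.
have h1 := F _ _ i j H; have h2 := F _ _ i j Ha; have h3 := F _ _ i j Hc.
have h4 := F _ _ i j Hb; have h5 := F _ _ j i Hb.
move: h1 h2 h3 h4 h5; rewrite !mxE => h1 h2 h3 h4 h5.
lra.
Qed.

Lemma eeT_diag n (e : 'cV[R]_n.+1) (k : 'I_n.+1) :
  e = \col_i (if i == k then 1 else 0) -> isdiag (e *m e^T) /\ forall i, 0 <= (e *m e^T) i i.
Proof.
move=> ->; split.
  move=> i j ne; rewrite !mxE big_ord1 !mxE.
  by case: (eqVneq i k) => [ik|]; case: (eqVneq j k) => [jk|]; rewrite ?mulr0 ?mul0r //; move: ne; rewrite ik jk eqxx.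
by move=> i; rewrite !mxE big_ord1 !mxE; case: (_ == _); rewrite ?mulr1 ?mulr0.
Qed.

Lemma qformE N (A : 'M[R]_N) u : qform A u = bf A u u.
Proof. by []. Qed.
Lemma bfDl N (A : 'M[R]_N) u1 u2 z : bf A (u1 + u2) z = bf A u1 z + bf A u2 z.
Proof. by rewrite bf_tr bfDr -!bf_tr. Qed.
Lemma bfNl N (A : 'M[R]_N) u z : bf A (- u) z = - bf A u z.
Proof. by rewrite bf_tr bfNr -!bf_tr. Qed.
Lemma bf_expand N (A : 'M[R]_N) x y : A^T = A ->
  bf A (x - y) (x - y) = bf A x x - 2 * bf A x y + bf A y y.
Proof.
move=> sA; rewrite !(bfDl, bfDr, bfNl, bfNr).
have -> : bf A y x = bf A x y by rewrite bf_tr sA.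
ring.
Qed.
Lemma skew_bf N (S : 'M[R]_N) u z : S^T = - S -> bf S u z = - bf S z u.
Proof. by move=> h; rewrite bf_tr h bfNm. Qed.
Lemma skew_bf0 N (S : 'M[R]_N) u : S^T = - S -> bf S u u = 0.
Proof. move=> h; have := skew_bf u u h; lra. Qed.

Lemma tens_e m n (H : 'M[R]_m) (e f : 'cV[R]_n) :
  (H *t (1%:M : 'M[R]_n)) *m ((1%:M *t e) *m (1%:M *t f)^T) = H *t (e *m f^T).
Proof.
by rewrite trmx_tens trmx1 !tensmx_mul !mul1mx mulmx1.
Qed.
End Aux.

Theorem theorem3p4 (R : realFieldType) (nx nt px pt nv : nat)
  (xs : 'cV[R]_nx.+1) (Dxb Hxb Qxb : 'M[R]_nx.+1)
  (ts : 'cV[R]_nt.+1) (Dtb Htb Qtb : 'M[R]_nt.+1)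
  (v w : 'I_nv -> R) (eps sigs siga : R)
  (rho0 rho : 'cV[R]_(nt.+1 * nx.+1)) (g0 g : 'I_nv -> 'cV[R]_(nt.+1 * nx.+1)) :
  is_SBP px xs Dxb Hxb Qxb ->
  is_SBP pt ts Dtb Htb Qtb ->
  (forall k, 0 < w k) ->
  \sum_(k < nv) w k = 1 ->
  \sum_(k < nv) w k * v k = 0 ->
  0 < eps -> 0 < sigs -> 0 <= siga ->
  vavg w g0 = 0 ->
  let Ix : 'M[R]_nx.+1 := 1%:M in
  let It : 'M[R]_nt.+1 := 1%:M in
  let Dt := Dtb *t Ix in
  let Dx := It *t Dxb in
  let Ht := Htb *t Ix in
  let Hx := It *t Hxb in
  let tR := It *t tlast R nx in
  let tL := It *t tfirst R nx in
  let tB := tfirst R nt *t Ix in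
  let Dxt := Dx - (1 / 2) *: (invmx Hx *m
               (tR *m (tR^T - tL^T) - tL *m (tL^T - tR^T))) in
  Dt *m rho + Dxt *m vavg w (fun k => v k *: g k)
    = - (siga *: rho) - invmx Ht *m (tB *m tB^T) *m (rho - rho0) ->
  (forall k : 'I_nv,
     Dt *m g k + (v k / eps) *: (Dxt *m g k)
     - (1 / eps) *: vavg w (fun j => v j *: (Dxt *m g j))
     + (v k / eps ^+ 2) *: (Dxt *m rho)
     = - ((sigs / eps ^+ 2 + siga) *: g k) - invmx Ht *m (tB *m tB^T) *m (g k - g0 k)) ->
  let ET := (tlast R nt *m (tlast R nt)^T) *t Hxb in
  let EB := (tfirst R nt *m (tfirst R nt)^T) *t Hxb in
  (1 / 2) * qform ET rho + (eps ^+ 2 / 2) * \sum_(k < nv) w k * qform ET (g k)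
  <= (1 / 2) * qform EB rho0 + (eps ^+ 2 / 2) * \sum_(k < nv) w k * qform EB (g0 k).
Proof.
move=> sbpx sbpt wpos wsum wvsum epsp sigp sigap g0avg Ix It Dt Dx Ht Hx tR tL tB Dxt Hr Hg; cbv zeta.
set ET := (tlast R nt *m _ *t Hxb).
set EB := (tfirst R nt *m _ *t Hxb).
case: sbpx => _ _ [/isdiag_of dHxb pHxb] DxE QxE.
case: sbpt => _ _ [/isdiag_of dHtb pHtb] DtE QtE.
have uHxb := diag_unit dHxb pHxb.
have uHtb := diag_unit dHtb pHtb.
have sHxb := isdiag_tr dHxb.
have sHtb := isdiag_tr dHtb.
set M := Htb *t Hxb.
have dM : isdiag M by apply: isdiag_tens.
have pM : forall i, 0 < M i i.
  by apply: (tens_diag_entry (P := fun x => 0 < x)) => // x y; apply: mulr_gt0.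
have uHx : Hx \in unitmx by apply: tensmx_unit => //; apply: unitmx1.
have uHt : Ht \in unitmx by apply: tensmx_unit => //; apply: unitmx1.
have MDt : M *m Dt = Qtb *t Hxb by rewrite /Dt /M tensmx_mul DtE mulKVmx // mulmx1.
have [dTT pTT] := eeT_diag (erefl (tlast R nt)).
have [dBB pBB] := eeT_diag (erefl (tfirst R nt)).
have dET : isdiag ET by apply: isdiag_tens.
have dEB : isdiag EB by apply: isdiag_tens.
have pET : forall i, 0 <= ET i i.
  apply: (tens_diag_entry (P := fun x => 0 <= x)) => // [x y|i]; first exact: mulr_ge0.
  exact: ltW.
have pEB : forall i, 0 <= EB i i.
  apply: (tens_diag_entry (P := fun x => 0 <= x)) => // [x y|i]; first exact: mulr_ge0.
  exact: ltW.
have sEB : EB^T = EB by apply: isdiag_tr.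
have Hqt : forall u, bf (M *m Dt) u u = 1/2 * (qform ET u - qform EB u).
  move=> u; rewrite MDt.
  have h : Qtb *t Hxb + (Qtb *t Hxb)^T = ET - EB.
    by rewrite trmx_tens sHxb -tensmxDl QtE tensmxBl.
  have := congr1 (fun A => bf A u u) h; rewrite /= bfDm -bf_tr bfDm bfNm !qformE.
  lra.
have MK : M *m (invmx Ht *m (tB *m tB^T)) = EB.
  have -> : M = (1%:M *t Hxb) *m Ht by rewrite /Ht tensmx_mul mul1mx mulmx1.
  rewrite mulmxA mulmxK // /tB trmx_tens trmx1 !tensmx_mul !mul1mx !mulmx1 //.
have MS : (M *m Dxt)^T = - (M *m Dxt).
  have -> : M *m Dxt = Htb *t Qxb - (1/2) *: ((Htb *t (tlast R nx *m (tlast R nx)^T))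
     - (Htb *t (tlast R nx *m (tfirst R nx)^T)) - ((Htb *t (tfirst R nx *m (tfirst R nx)^T))
     - (Htb *t (tfirst R nx *m (tlast R nx)^T)))).
    rewrite /Dxt mulmxBr -scalemxAr mulmxA.
    have -> : M *m Dx = Htb *t Qxb by rewrite /Dx /M tensmx_mul mulmx1 DxE mulKVmx.
    have -> : M *m invmx Hx = Htb *t Ix.
      have -> : M = (Htb *t Ix) *m Hx by rewrite /Hx tensmx_mul mulmx1 mul1mx.
      by rewrite mulmxK.
    by rewrite !mulmxBr !mulmxA -!mulmxA !tens_e.
  apply: skew_aux.
  - by rewrite trmx_tens sHtb -tensmxDr QxE tensmxBr.
  - by rewrite trmx_tens sHtb trmx_mul trmxK.
  - by rewrite trmx_tens sHtb trmx_mul trmxK.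
  - by rewrite trmx_tens sHtb trmx_mul trmxK.
set S := M *m Dxt.
set QT := M *m Dt.
set K := invmx Ht *m (tB *m tB^T).
set V := vavg w (fun k => v k *: g k).
set c := sigs / eps ^+ 2 + siga.
have cpos : 0 < c by rewrite /c; apply: ltr_wpDr => //; apply: divr_gt0 => //; apply: exprn_gt0.
have vavgE : vavg w (fun j => v j *: (Dxt *m g j)) = Dxt *m V.
  rewrite /V /vavg mulmx_sumr; apply: eq_bigr => j _; by rewrite !scalemxAr.
have Ek : forall u k, bf QT u (g k) + v k / eps * bf S u (g k) - 1/eps * bf S u V
    + v k / eps ^+ 2 * bf S u rho
    = - (c * bf M u (g k)) - (bf EB u (g k) - bf EB u (g0 k)).
  move=> u k; have := congr1 (bf M u) (Hg k).
  rewrite vavgE ?(bfDr, bfNr, bfZr, bfMr) -/S -/QT -/K MK.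
  rewrite ?(bfDr, bfNr) /c; lra.
have Er : bf QT rho rho + bf S rho V = - (siga * bf M rho rho) - (bf EB rho rho - bf EB rho rho0).
  have := congr1 (bf M rho) Hr.
  rewrite ?(bfDr, bfNr, bfZr, bfMr) -/S -/QT -/K MK.
  rewrite ?(bfDr, bfNr); lra.
set G := vavg w g.
have psdEB : forall u, 0 <= bf EB u u by move=> u; apply: bf_diag_ge0.
have psdET : forall u, 0 <= bf ET u u by move=> u; apply: bf_diag_ge0.
have psdM : forall u, 0 <= bf M u u by move=> u; apply: bf_diag_ge0 => // i; apply: ltW.
have G0 : G = 0.
  have Gs : \sum_(k < nv) w k * (bf QT G (g k) + v k / eps * bf S G (g k) - 1/eps * bf S G V
    + v k / eps ^+ 2 * bf S G rho)
    = \sum_(k < nv) w k * (- (c * bf M G (g k)) - (bf EB G (g k) - bf EB G (g0 k))).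
    by apply: eq_bigr => k _; rewrite Ek.
  rewrite (eq_bigr (fun k => w k * bf QT G (g k) + 1/eps * (w k * (v k * bf S G (g k)))
     + (- (1/eps * bf S G V)) * w k + (1 / eps ^+ 2 * bf S G rho) * (w k * v k))) in Gs;
    last by move=> k _; ring.
  rewrite [RHS](eq_bigr (fun k => (- c) * (w k * bf M G (g k)) + (-1) * (w k * bf EB G (g k))
     + w k * bf EB G (g0 k))) in Gs; last by move=> k _; ring.
  rewrite !big_split /= -!mulr_sumr -?mulr_suml in Gs.
  have hV : \sum_(i < nv) w i * (v i * bf S G (g i)) = bf S G V.
    by rewrite /V bf_vavgr; apply: eq_bigr => k _; rewrite bfZr.
  rewrite wsum wvsum hV -!bf_vavgr -/G g0avg bf0r Hqt !qformE in Gs.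
  have hET := psdET G; have hEB := psdEB G; have hM := psdM G.
  have cm : c * bf M G G = 0.
    apply/eqP; rewrite eq_le; apply/andP; split; last exact: mulr_ge0 (ltW cpos) hM.
    lra.
  move/eqP: cm; rewrite mulf_eq0 (gt_eqF cpos) /= => /eqP.
  by apply: bf_diag_eq0.
have skS := skew_bf0 _ MS.
have perk : forall k, qform ET (g k) <= qform EB (g0 k)
     - 2 * (v k / eps ^+ 2 * bf S (g k) rho) + 2 * (1 / eps * bf S (g k) V).
  move=> k; have := Ek (g k) k; rewrite skS Hqt !qformE => h.
  have hd := psdEB (g k - g0 k); rewrite bf_expand // in hd.
  have hm : 0 <= c * bf M (g k) (g k) by apply: mulr_ge0 (ltW cpos) (psdM _).
  lra.
have sumI : \sum_(k < nv) w k * qform ET (g k) <= \sum_(k < nv) w k * (qform EB (g0 k)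
     - 2 * (v k / eps ^+ 2 * bf S (g k) rho) + 2 * (1 / eps * bf S (g k) V)).
  by apply: ler_sum => k _; apply: ler_wpM2l; [exact: ltW | exact: perk].
rewrite [X in _ <= X](eq_bigr (fun k => w k * qform EB (g0 k) + (- 2 / eps ^+ 2) * (w k * (v k * bf S (g k) rho))
   + (2 / eps) * (w k * bf S (g k) V))) in sumI; last by move=> k _; ring.
rewrite !big_split /= -!mulr_sumr in sumI.
have hP : \sum_(i < nv) w i * (v i * bf S (g i) rho) = bf S V rho.
  by rewrite /V bf_vavgl; apply: eq_bigr => k _; rewrite bfZl.
rewrite hP -bf_vavgl -/G G0 bf0l mulr0 addr0 in sumI.
have hr : qform ET rho <= qform EB rho0 + 2 * bf S V rho.
  move: Er; rewrite Hqt (skew_bf _ _ MS) !qformE => h.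
  have hd := psdEB (rho - rho0); rewrite bf_expand // in hd.
  have hm : 0 <= siga * bf M rho rho by apply: mulr_ge0 (psdM _).
  lra.
have e2 : 0 <= eps ^+ 2 / 2 by apply: divr_ge0 => //; apply: exprn_ge0; apply: ltW.
have := ler_wpM2l e2 sumI.
have -> : eps ^+ 2 / 2 * (\sum_(i < nv) w i * qform EB (g0 i) + -2 / eps ^+ 2 * bf S V rho)
   = eps ^+ 2 / 2 * \sum_(i < nv) w i * qform EB (g0 i) - bf S V rho.
  by field; rewrite ?expf_neq0 ?lt0r_neq0.
lra.
Qed.
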